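(* Let $d>0$, let $\mathcal{S}$ be the 4-PAM constellation labeled by the Gray labeling $\boldsymbol{q}=[1,0,2,3]$ or $\boldsymbol{q}=[2,0,1,3]$, and let $\mathcal{B}\subset\{0,1\}^{2N}$ be any binary linear code with at least two codewords. Then $\mathsf{L}(\mathcal{B})=0$.
   Context: $\mathcal{S}=\{s_1,s_2,s_3,s_4\}$ with $s_1=-3d$, $s_2=-d$, $s_3=d$, $s_4=3d$. A labeling is a bijection $\Phi_{\mathcal{S}}:\{0,1\}^2\to\mathcal{S}$, described by $\boldsymbol{q}=[q_1,\dots,q_4]$ where $q_i$ is the integer whose two-bit representation (most significant bit first) is $\Phi_{\mathcal{S}}^{-1}(s_i)$. A codeword of $\mathcal{B}$ is written $\boldsymbol{b}=[\boldsymbol{b}[1],\dots,\boldsymbol{b}[N]]$ with $\boldsymbol{b}[k]=[b_1[k],b_2[k]]$, and the CM code is $\mathcal{X}=\{[\Phi_{\mathcal{S}}(\boldsymbol{b}[1]),\dots,\Phi_{\mathcal{S}}(\boldsymbol{b}[N])]:\boldsymbol{b}\in\mathcal{B}\}$. For $\boldsymbol{x},\hat{\boldsymbol{x}}\in\mathcal{S}^N$ and each $k$ with $x[k]\neq\hat{x}[k]$: $\mu^{\mathcal{X}}_k=\sigma^{2,\mathcal{X}}_k=(x[k]-\hat{x}[k])^2/(4d^2)$; $\mu^{\mathcal{B}}_k=\sigma^{2,\mathcal{B}}_k=(x[k]-\hat{x}[k])^2/(4d^2)$ except that if $\{x[k],\hat{x}[k]\}=\{s_1,s_4\}$ then $\mu^{\mathcal{B}}_k=3$,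 $\sigma^{2,\mathcal{B}}_k=1$. Summing over $k$ with $x[k]\neq\hat{x}[k]$, $a^{\mathcal{X}}(\boldsymbol{x},\hat{\boldsymbol{x}})=\sum_k\mu^{\mathcal{X}}_k/\sqrt{\sum_k\sigma^{2,\mathcal{X}}_k}$ and $a^{\mathcal{B}}(\boldsymbol{x},\hat{\boldsymbol{x}})=\sum_k\mu^{\mathcal{B}}_k/\sqrt{\sum_k\sigma^{2,\mathcal{B}}_k}$ (normalized distances of the symbol-wise ML decoder and of the bit-wise max-log decoder under the zero-crossing approximation). The asymptotic loss of the code is $\mathsf{L}(\mathcal{B})=20\log_{10}\Big(\min_{\boldsymbol{x}\neq\hat{\boldsymbol{x}}\in\mathcal{X}}a^{\mathcal{X}}(\boldsymbol{x},\hat{\boldsymbol{x}})\big/\min_{\boldsymbol{x}\neq\hat{\boldsymbol{x}}\in\mathcal{X}}a^{\mathcal{B}}(\boldsymbol{x},\hat{\boldsymbol{x}})\Big)$ dB. *)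

(* Defs.v *)
From HB Require Import structures.
From mathcomp Require Import all_boot all_order all_algebra all_fingroup.
From mathcomp Require Import all_classical all_reals exp.
Set Implicit Arguments. Unset Strict Implicit. Unset Printing Implicit Defensive.
Import Order.TTheory GRing.Theory Num.Theory.
Local Open Scope ring_scope.

Section Defs.
Variable R : realType.

Definition log10 (x : R) : R := ln x / ln 10.

(* 4-PAM constellation: s_{i+1} = (2 i - 3) d for i : 'I_4,
   i.e. s_1 = -3d, s_2 = -d, s_3 = d, s_4 = 3d (0-based indices here). *)
Definition pam (d : R) (i : 'I_4) : R := (2 * i%:R - 3) * d.

Definition bits2 (b : bool * bool) : 'I_4 := inord (2 * b.1 + b.2)%N.

(* Labeling described by q : q i = integer whose 2-bit representation is
   Phi^{-1}(s_i); hence Phi b = s_i with q i = bits2 b. *)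
Definition Phi (d : R) (q : {perm 'I_4}) (b : bool * bool) : R :=
  pam d (q^-1 (bits2 b))%g.

(* Codewords b = [b[1], ..., b[N]] with b[k] = [b_1[k], b_2[k]]. *)
Definition cw (N : nat) := {ffun 'I_N -> bool * bool}.

Definition cw0 (N : nat) : cw N := [ffun _ => (false, false)].
Definition cw_add (N : nat) (b b' : cw N) : cw N :=
  [ffun k => (addb (b k).1 (b' k).1, addb (b k).2 (b' k).2)].

Definition binary_linear_code (N : nat) (B : {set cw N}) : Prop :=
  cw0 N \in B /\ forall b b', b \in B -> b' \in B -> cw_add b b' \in B.

Definition modulate (N : nat) (d : R) (q : {perm 'I_4}) (b : cw N)
  : {ffun 'I_N -> R} := [ffun k => Phi d q (b k)].

Definition muX (d x xh : R) : R := (x - xh) ^+ 2 / (4 * d ^+ 2).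
Definition is_s1s4 (d x xh : R) : bool :=
  ((x == - (3 * d)) && (xh == 3 * d)) || ((x == 3 * d) && (xh == - (3 * d))).
Definition muB (d x xh : R) : R := if is_s1s4 d x xh then 3 else muX d x xh.
Definition sigB (d x xh : R) : R := if is_s1s4 d x xh then 1 else muX d x xh.

Definition aX (N : nat) (d : R) (x xh : {ffun 'I_N -> R}) : R :=
  (\sum_(k | x k != xh k) muX d (x k) (xh k)) /
    Num.sqrt (\sum_(k | x k != xh k) muX d (x k) (xh k)).

Definition aB (N : nat) (d : R) (x xh : {ffun 'I_N -> R}) : R :=
  (\sum_(k | x k != xh k) muB d (x k) (xh k)) /
    Num.sqrt (\sum_(k | x k != xh k) sigB d (x k) (xh k)).

Definition finmin (s : seq R) : R := foldr Num.min (head 0 s) s.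

Definition mindist (N : nat) (a : {ffun 'I_N -> R} -> {ffun 'I_N -> R} -> R)
  (d : R) (q : {perm 'I_4}) (B : {set cw N}) : R :=
  finmin [seq a (modulate d q p.1) (modulate d q p.2) |
          p <- enum [set p : cw N * cw N | [&& p.1 \in B, p.2 \in B &
                      modulate d q p.1 != modulate d q p.2]]].

Definition loss (N : nat) (d : R) (q : {perm 'I_4}) (B : {set cw N}) : R :=
  20 * log10 (mindist (@aX N d) d q B / mindist (@aB N d) d q B).

End Defs.

(* Main.v *)
Require Import Defs.
From HB Require Import structures.
From mathcomp Require Import all_boot all_order all_algebra all_fingroup.
From mathcomp Require Import all_classical all_reals exp.
From mathcomp Require Import ring lra.
Import Order.TTheory GRing.Theory Num.Theory.
Local Open Scope ring_scope.

Definition sqn (a b : nat) : nat := ((a - b) * (a - b) + (b - a) * (b - a))%N.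
Definition s14n (a b : nat) : bool :=
  ((a == 0%N) && (b == 3%N)) || ((a == 3%N) && (b == 0%N)).
Definition xr (c c' : bool * bool) : bool * bool := (addb c.1 c'.1, addb c.2 c'.2).
Definition ff : bool * bool := (false, false).
Definition cond (G : bool * bool -> nat) (c c' : bool * bool) : bool :=
  [&& G c != G c', G ff != G (xr c c'), (0 < sqn (G ff) (G (xr c c')))%N,
      (sqn (G ff) (G (xr c c')) <= sqn (G c) (G c'))%N,
      ~~ s14n (G ff) (G (xr c c')) &
      s14n (G c) (G c') ==> (sqn (G ff) (G (xr c c')) <= 1)%N].

Definition G1 (c : bool * bool) : nat :=
  match c with (false,false) => 1 | (false,true) => 0 | (true,false) => 2 | (true,true) => 3 end.
Definition G2 (c : bool * bool) : nat :=
  match c with (false,false) => 1 | (false,true) => 2 | (true,false) => 0 | (true,true) => 3 end.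

Lemma chk1 c c' : c != c' -> cond G1 c c'.
Proof. by case: c c' => [[] []] [[] []]. Qed.
Lemma chk2 c c' : c != c' -> cond G2 c c'.
Proof. by case: c c' => [[] []] [[] []]. Qed.

Section S.
Variables (R : realType) (d : R).
Hypothesis hd : 0 < d.

Lemma pam_eq (i j : 'I_4) : (pam d i == pam d j) = (i == j).
Proof.
apply/eqP/eqP => [|->//]; rewrite /pam => /(mulIf (lt0r_neq0 hd)) H.
have : (i%:R = j%:R :> R) by lra.
by move/eqP; rewrite eqr_nat => /eqP; apply: val_inj.
Qed.

Lemma pam0 : - (3 * d) = pam d ord0.
Proof. rewrite /pam /=; lra. Qed.
Lemma pam3 : 3 * d = pam d ord_max.
Proof. rewrite /pam /=; lra. Qed.

Lemma sqR (a b : nat) : ((a%:R - b%:R) ^+ 2 : R) = (sqn a b)%:R.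
Proof.
rewrite /sqn natrD !natrM; case: (leqP a b) => h.
  have -> : (a - b)%N = 0%N by apply/eqP; rewrite subn_eq0.
  rewrite natrB //; ring.
have -> : (b - a)%N = 0%N by apply/eqP; rewrite subn_eq0 ltnW.
rewrite natrB 1?ltnW //; ring.
Qed.

Lemma muX_pam (i j : 'I_4) : muX d (pam d i) (pam d j) = (sqn i j)%:R.
Proof. rewrite -sqR /muX /pam; field. by rewrite lt0r_neq0. Qed.

Lemma s14_pam (i j : 'I_4) : is_s1s4 d (pam d i) (pam d j) = s14n i j.
Proof. by rewrite /is_s1s4 pam0 pam3 !pam_eq. Qed.

Lemma sqrt_div (a : R) : 0 < a -> a / Num.sqrt a = Num.sqrt a.
Proof.
move=> ha; have hs : 0 < Num.sqrt a by rewrite sqrtr_gt0.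
rewrite -{1}(sqr_sqrtr (ltW ha)) expr2 -mulrA divff ?mulr1 //; exact: lt0r_neq0.
Qed.

Lemma key_ineq (T U S : R) : 0 < T -> T <= U -> U <= S ->
  T / Num.sqrt T <= S / Num.sqrt U.
Proof.
move=> hT hTU hUS; have hU : 0 < U by apply: lt_le_trans hTU.
rewrite sqrt_div //; apply: le_trans (ler_wsqrtr hTU) _.
rewrite -{1}(@sqrt_div U hU); apply: ler_wpM2r => //.
by rewrite invr_ge0 sqrtr_ge0.
Qed.

Variables (q : {perm 'I_4}) (G : bool * bool -> nat).
Definition g (c : bool * bool) : 'I_4 := (q^-1)%g (bits2 c).
Hypothesis HG : forall c, nat_of_ord (g c) = G c.
Hypothesis Hchk : forall c c', c != c' -> cond G c c'.

Lemma g_eq c c' : (g c == g c') = (c == c').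
Proof.
case: (eqVneq c c') => [->|ne]; first by rewrite eqxx.
apply/negbTE; move: (Hchk _ _ ne) => /and5P [h _ _ _ _].
by apply: contra h => /eqP h; rewrite -!HG h.
Qed.

Lemma Phi_eq c c' : (Phi d q c == Phi d q c') = (c == c').
Proof. rewrite /Phi pam_eq; exact: g_eq. Qed.

Lemma Phi0_eq c c' : (Phi d q ff != Phi d q (xr c c')) = (c != c').
Proof.
case: (eqVneq c c') => [->|ne].
  by rewrite /xr !addbb eqxx.
move: (Hchk _ _ ne) => /and5P [_ h _ _ _].
rewrite /Phi pam_eq; apply: contra h => /eqP h.
by rewrite -!HG /g h.
Qed.

Lemma pos c c' : c != c' ->
  let i := Phi d q c in let j := Phi d q c' in
  let i0 := Phi d q ff in let j0 := Phi d q (xr c c') in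
  [/\ muX d i0 j0 <= muX d i j, muX d i0 j0 <= sigB d i j,
      sigB d i j <= muB d i j,
      muB d i0 j0 = muX d i0 j0 /\ sigB d i0 j0 = muX d i0 j0 & 0 < muX d i0 j0].
Proof.
move=> ne; move: (Hchk _ _ ne) => /and5P [_ _ h0 h1 /andP[h2 h3]] /=.
change (Phi d q ?c) with (pam d (g c)).
rewrite /sigB /muB !s14_pam !muX_pam !HG (negbTE h2).
split; rewrite ?ler_nat ?ltr0n //.
- by case: ifP => // hs; move: h3; rewrite hs /= => h3; rewrite (_ : (1:R) = 1%:R) // ler_nat.
- case: ifP => // _; lra.
Qed.

Variable N : nat.
Notation md b := (modulate d q b).

Lemma mod_inj (b b' : cw N) : md b = md b' -> b = b'.
Proof.
move=> h; apply/ffunP => k; have := congr1 (fun f : {ffun _ -> R} => f k) h.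
by rewrite !ffunE => /eqP; rewrite Phi_eq => /eqP.
Qed.

Lemma pair_key (b b' : cw N) : md b != md b' ->
  let z := md (cw0 N) in let e := md (cw_add b b') in
  [/\ aX d z e = aB d z e, aX d z e <= aX d (md b) (md b'),
      aX d z e <= aB d (md b) (md b') & 0 < aX d z e].
Proof.
move=> ne /=.
have Ix k : (md b k != md b' k) = (b k != b' k) by rewrite !ffunE Phi_eq.
have Iz k : (md (cw0 N) k != md (cw_add b b') k) = (b k != b' k).
  by rewrite !ffunE -Phi0_eq.
have ez k : md (cw0 N) k = Phi d q ff by rewrite !ffunE.
have ee k : md (cw_add b b') k = Phi d q (xr (b k) (b' k)) by rewrite !ffunE.
have [k hk] : exists k, b k != b' k.
  apply/existsP; apply: contraNT ne => /existsPn H.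
  by apply/eqP; congr (md _); apply/ffunP => k; apply/eqP; move/negPn: (H k).
set T := \sum_(k | b k != b' k) muX d (md (cw0 N) k) (md (cw_add b b') k).
have hT : 0 < T.
  rewrite /T (bigD1 k) //=.
  have h1 : 0 < muX d (md (cw0 N) k) (md (cw_add b b') k).
    by rewrite ez ee; case: (pos _ _ hk).
  have h2 : 0 <= \sum_(i | (b i != b' i) && (i != k)) muX d (md (cw0 N) i) (md (cw_add b b') i).
    apply: sumr_ge0 => i /andP [hi _]; rewrite ez ee; case: (pos _ _ hi) => _ _ _ _ h.
    exact: ltW.
  lra.
rewrite /aX /aB !(eq_bigl _ _ Ix) !(eq_bigl _ _ Iz) -/T.
have -> : \sum_(k | b k != b' k) muB d (md (cw0 N) k) (md (cw_add b b') k) = T.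
  by apply: eq_bigr => i hi; rewrite ez ee; case: (pos _ _ hi) => _ _ _ [-> _].
have -> : \sum_(k | b k != b' k) sigB d (md (cw0 N) k) (md (cw_add b b') k) = T.
  by apply: eq_bigr => i hi; rewrite ez ee; case: (pos _ _ hi) => _ _ _ [_ ->].
split => //.
- apply: key_ineq => //; apply: ler_sum => i hi; rewrite ez ee !ffunE.
  by case: (pos _ _ hi).
- apply: key_ineq => //; apply: ler_sum => i hi; rewrite ?ez ?ee !ffunE.
  + by case: (pos _ _ hi).
  + by case: (pos _ _ hi).
- by rewrite sqrt_div // sqrtr_gt0.
Qed.

Lemma finmin_le (s : seq R) x : x \in s -> finmin s <= x.
Proof.
rewrite /finmin; move: (head 0 s) => a; elim: s => //= y s IH.
rewrite inE => /orP [/eqP->|h]; first by rewrite ge_min lexx.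
by rewrite ge_min (IH h) orbT.
Qed.

Lemma finmin_in (s : seq R) : s != [::] -> finmin s \in s.
Proof.
have H a : foldr Num.min a s \in a :: s.
  elim: s => [|y s IH] /=; first by rewrite inE.
  rewrite minEle; case: ifP => _; first by rewrite !inE eqxx orbT.
  by move: IH; rewrite !inE => /orP [->|->]; rewrite ?orbT.
case: s H => // y s H _; rewrite /finmin /=.
by move: (H y); rewrite /= !inE => /orP [/eqP->|]; rewrite ?eqxx.
Qed.

Variable B : {set cw N}.
Hypothesis hB : binary_linear_code B.
Hypothesis hB1 : (1 < #|B|)%N.

Lemma md0_neq (b b' : cw N) : md b != md b' -> md (cw0 N) != md (cw_add b b').
Proof.
move=> ne; apply: contra ne => /eqP /mod_inj h; apply/eqP; congr (md _).
apply/ffunP => k; have := congr1 (fun f : cw N => f k) h; rewrite !ffunE.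
by case: (b k) (b' k) => [[] []] [[] []].
Qed.

Lemma mindist_eq :
  mindist (@aX R N d) d q B = mindist (@aB R N d) d q B /\
  0 < mindist (@aX R N d) d q B.
Proof.
rewrite /mindist; set E := enum _.
have memE p : (p \in E) = [&& p.1 \in B, p.2 \in B & md p.1 != md p.2].
  by rewrite mem_enum inE.
have key p : p \in E -> let p0 := (cw0 N, cw_add p.1 p.2) in
  [/\ p0 \in E, aX d (md p0.1) (md p0.2) = aB d (md p0.1) (md p0.2),
      aX d (md p0.1) (md p0.2) <= aX d (md p.1) (md p.2),
      aX d (md p0.1) (md p0.2) <= aB d (md p.1) (md p.2) &
      0 < aX d (md p0.1) (md p0.2)].
  rewrite memE => /and3P [h1 h2 h3] /=.
  case: (pair_key _ _ h3) => /= a1 a2 a3 a4; split => //.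
  have h4 := md0_neq _ _ h3; rewrite memE /= h4 andbT; case: hB => -> hadd; exact: hadd.
have nE : E != [::].
  case/card_gt1P: hB1 => x [y [hx hy hxy]].
  apply/negP => /eqP hE; have : (x, y) \in E.
    rewrite memE /= hx hy /=; apply: contra hxy => /eqP /mod_inj ->; by [].
  by rewrite hE.
set sX := [seq _ | p <- E]; set sB := [seq _ | p <- E].
have nX : sX != [::] by rewrite /sX; case: (E) nE.
have nB : sB != [::] by rewrite /sB; case: (E) nE.
have [p hp eX] := mapP (finmin_in _ nX).
have [p' hp' eB] := mapP (finmin_in _ nB).
case: (key p hp) => /= i1 e1 l1 _ g1.
case: (key p' hp') => /= i2 e2 _ l2 _.
have le1 : finmin sB <= finmin sX.
  rewrite eX; apply: le_trans l1; rewrite e1; apply: finmin_le.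
  by apply/mapP; exists (cw0 N, cw_add p.1 p.2).
have le2 : finmin sX <= finmin sB.
  rewrite eB; apply: le_trans l2; apply: finmin_le.
  by apply/mapP; exists (cw0 N, cw_add p'.1 p'.2).
split; first by apply/eqP; rewrite eq_le le1 le2.
by rewrite eX; apply: lt_le_trans l1.
Qed.
End S.

Lemma HG1 (q : {perm 'I_4}) (L : seq nat) :
  [seq val (q i) | i <- enum 'I_4] = L ->
  forall c, nth 0%N L (nat_of_ord (g q c)) = (2 * c.1 + c.2)%N.
Proof.
move=> hL c.
have Hq (i : 'I_4) : val (q i) = nth 0%N L i.
  by rewrite -hL (nth_map ord0) ?size_enum_ord // nth_ord_enum.
rewrite -(Hq (g q c)) /g permKV /bits2.
by case: c => [[] []]; rewrite /= inordK.
Qed.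

Theorem theorem2 (R : realType) (d : R) (N : nat) (q : {perm 'I_4})
  (B : {set cw N}) :
  0 < d ->
  ([seq val (q i) | i <- enum 'I_4] = [:: 1; 0; 2; 3]%N \/
   [seq val (q i) | i <- enum 'I_4] = [:: 2; 0; 1; 3]%N) ->
  binary_linear_code B ->
  (1 < #|B|)%N ->
  loss d q B = 0.
Proof.
move=> hd hq hB hB1.
have [G [HG Hchk]] : exists G, (forall c, nat_of_ord (g q c) = G c) /\
     (forall c c', c != c' -> cond G c c').
  case: hq => hL; [exists G1 | exists G2]; split; try exact: chk1; try exact: chk2;
  move=> c; move: (HG1 _ _ hL c); move: (g q c) => [[|[|[|[|i]]]] hi] //=;
  by case: c => [[] []].
case: (@mindist_eq R d hd q G HG Hchk N B hB hB1) => e h.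
rewrite /loss -e divff ?lt0r_neq0 // /log10 ln1 mul0r mulr0 //.
Qed.
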